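(* Let $(\boldsymbol x^H,\eta^H,\boldsymbol y^H,u^H)$ be the solution returned by Algorithm 1 (described in the context) and $(\boldsymbol x^*,\eta^*,\boldsymbol y^*,u^* )$ an optimal solution of the multistage model. Then $$z^{MS}_{T,R}(\boldsymbol x^H,\eta^H,\boldsymbol y^H,u^H)-z^{MS}_{T,R}(\boldsymbol x^*,\eta^*,\boldsymbol y^*,u^* )\le\sum_{t=1}^T\sum_{i=1}^Mf_{ti}.$$
   Context: Setting. Integers $T\ge2$, $M,N\ge1$; costs $f_{ti}\ge0$ (vector $\boldsymbol f_t$), $c_{tij}\ge0$ (vector $\boldsymbol c_t\in\mathbb R^{MN}$), capacities $h_{ti}>0$; $(\boldsymbol A_t\boldsymbol y)_j=\sum_iy_{ij}$, $(\boldsymbol B_t\boldsymbol y)_i=\frac1{h_{ti}}\sum_jy_{ij}$. Ceilings and maxima of vectors are componentwise. Scenario tree: finite rooted tree, node set $\mathcal T$, root $1$, all root-to-leaf paths of $T$ nodes; $\mathcal T_t$ nodes at depth $t$, $t_n$ period of $n$, $\mathcal L=\mathcal T_T$, $a(n)$ parent, $\mathcal C(n)$ children, $\mathcal P(n)$ nodes on the root-to-$n$ path (inclusive); probabilities $p_n>0$, $\sum_{n\in\mathcal T_t}p_n=1$, $\sum_{m\in\mathcal C(n)}p_m=p_n$; demands $\boldsymbol d_n\in\mathbb R^N_{\ge0}$. Risk parameters $\lambda_t\in[0,1]$, $\alpha_t\in(0,1)$ ($t\ge2$); $\tilde{\boldsymbol f}_n=\boldsymbol f_{t_n}$ if $n=1$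 else $(1-\lambda_{t_n})\boldsymbol f_{t_n}$; $\tilde{\boldsymbol c}_n=\boldsymbol c_{t_n}$ if $n=1$ else $(1-\lambda_{t_n})\boldsymbol c_{t_n}$; $\tilde\lambda_n=0$ if $n\in\mathcal L$ else $\lambda_{t_n+1}$; $\tilde\alpha_n=0$ if $n=1$ else $\lambda_{t_n}/(1-\alpha_{t_n})$. Multistage model: minimize $z^{MS}_{T,R}(\boldsymbol x,\eta,\boldsymbol y,u):=\sum_{n\in\mathcal T}p_n\big(\tilde{\boldsymbol f}_n^{\mathsf T}\sum_{m\in\mathcal P(n)}\boldsymbol x_m+\tilde{\boldsymbol c}_n^{\mathsf T}\boldsymbol y_n+\tilde\lambda_n\eta_n+\tilde\alpha_nu_n\big)$ over $\boldsymbol x_n\in\mathbb Z^M_+$, $\boldsymbol y_n\in\mathbb R^{MN}_+$ ($n\in\mathcal T$), $\eta_n\in\mathbb R$ ($n\notin\mathcal L$), $u_n\ge0$ ($n\ne1$), subject to $\boldsymbol A_{t_n}\boldsymbol y_n=\boldsymbol d_n$, $\boldsymbol B_{t_n}\boldsymbol y_n\le\sum_{m\in\mathcal P(n)}\boldsymbol x_m$ ($n\in\mathcal T$), $u_n+\eta_{a(n)}\ge\boldsymbol f_{t_n}^{\mathsf T}\sum_{m\in\mathcal P(n)}\boldsymbol x_m+\boldsymbol c_{t_n}^{\mathsf T}\boldsymbol y_n$ ($n\ne1$). Algorithm 1. Step 1: solve the LP relaxation (drop integrality of $\boldsymbol x$) of the multistage model, obtaining an optimal $(\boldsymbol x^{MSLP},\eta^{MSLP},\boldsymbol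 y^{MSLP},u^{MSLP})$; if all $\boldsymbol x^{MSLP}_n$ are integral, stop and return it. Step 2: set $k=0$ and $(\boldsymbol x^0,\eta^0,\boldsymbol y^0,u^0)=(\boldsymbol x^{MSLP},\eta^{MSLP},\boldsymbol y^{MSLP},u^{MSLP})$. Repeat until successive iterates differ by less than a tolerance $\epsilon$: (a) set $\boldsymbol x^{k+1}_1=\lceil\boldsymbol B_{t_1}\boldsymbol y^k_1\rceil$, $\boldsymbol x^{k+1}_n=\max_{m\in\mathcal P(n)}\lceil\boldsymbol B_{t_m}\boldsymbol y^k_m\rceil-\max_{m\in\mathcal P(a(n))}\lceil\boldsymbol B_{t_m}\boldsymbol y^k_m\rceil$ ($n\ne1$), $\eta^{k+1}_n=\max_{m\in\mathcal C(n)}\{\boldsymbol f_{t_m}^{\mathsf T}\sum_{l\in\mathcal P(m)}\boldsymbol x^{k+1}_l+\boldsymbol c_{t_m}^{\mathsf T}\boldsymbol y^k_m-u^k_m\}$ ($n\notin\mathcal L$); (b) for each $n\ne1$ independently, let $(\boldsymbol y^{k+1}_n,u^{k+1}_n)$ be an optimal solution of $\min\tilde{\boldsymbol c}_n^{\mathsf T}\boldsymbol y_n+\tilde\alpha_nu_n$ s.t. $\boldsymbol B_{t_n}\boldsymbol y_n\le\sum_{m\in\mathcal P(n)}\boldsymbol x^{k+1}_m$, $\boldsymbol A_{t_n}\boldsymbol y_n=\boldsymbol d_n$, $u_n-\boldsymbol c_{t_n}^{\mathsf T}\boldsymbol y_n\ge\boldsymbol f_{t_n}^{\mathsf T}\sum_{m\in\mathcal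 P(n)}\boldsymbol x^{k+1}_m-\eta^{k+1}_{a(n)}$, $\boldsymbol y_n\ge0$, $u_n\ge0$; for $n=1$ solve the same problem without $u_1$ and the last constraint; (c) $k\leftarrow k+1$. Return the final iterate, denoted $(\boldsymbol x^H,\eta^H,\boldsymbol y^H,u^H)$. *)

(* Defs.v *)
From HB Require Import structures.
From mathcomp Require Import all_boot all_order all_algebra.
From mathcomp Require Import reals.
Set Implicit Arguments. Unset Strict Implicit. Unset Printing Implicit Defensive.
Import Order.TTheory GRing.Theory Num.Theory.
Local Open Scope ring_scope.

(* Problem data.  Periods are 1-based natural numbers t = 1..T; the values  *)
(* of period-indexed data outside 1..T are irrelevant.  The scenario tree   *)
Record data (R : realType) := Data {
  T : nat; M : nat; N : nat;
  f : nat -> 'I_M -> R;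
  c : nat -> 'I_M -> 'I_N -> R;
  h : nat -> 'I_M -> R;
  node : finType;
  root : node;
  par : node -> node;                   (* a(n), meaningful for n <> root *)
  per : node -> nat;
  p : node -> R;
  d : node -> 'I_N -> R;
  lam : nat -> R;
  alpha : nat -> R
}.
Arguments T {R} D : rename.  Arguments M {R} D : rename.  Arguments N {R} D : rename.
Arguments f {R} D _ _ : rename.  Arguments c {R} D _ _ _ : rename.  Arguments h {R} D _ _ : rename.
Arguments node {R} D : rename.  Arguments root {R} D : rename.  Arguments par {R} D _ : rename.
Arguments per {R} D _ : rename.  Arguments p {R} D _ : rename.  Arguments d {R} D _ _ : rename.
Arguments lam {R} D _ : rename.  Arguments alpha {R} D _ : rename.

Section Model.
Variable R : realType.
Variable D : data R.

Local Notation T := (T D).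
Local Notation M := (M D).
Local Notation N := (N D).
Local Notation V := (node D).
Local Notation r := (root D).
Local Notation a := (par D).
Local Notation per := (per D).

Definition children (n : V) : {set V} := [set m | (m != r) && (a m == n)].

Definition path_nodes (n : V) : {set V} :=
  [set m | [exists k : 'I_T, (k < per n)%N && (iter k a n == m)]].

Definition wf : Prop :=
  [/\ [/\ (2 <= T)%N, (1 <= M)%N & (1 <= N)%N],
      [/\ (forall t i, (1 <= t <= T)%N -> 0 <= f D t i),
          (forall t i j, (1 <= t <= T)%N -> 0 <= c D t i j) &
          (forall t i, (1 <= t <= T)%N -> 0 < h D t i)],
      [/\ per r = 1%N,
          (forall n, n != r -> per n = (per (a n)).+1),
          (forall n, (per n <= T)%N) &
          (forall n, (per n < T)%N -> exists m, m \in children n)],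
      [/\ (forall n, 0 < p D n),
          (forall t, (1 <= t <= T)%N -> \sum_(n | per n == t) p D n = 1),
          (forall n, (per n < T)%N -> \sum_(m in children n) p D m = p D n) &
          (forall n j, 0 <= d D n j)] &
      (forall t, (2 <= t <= T)%N ->
         (0 <= lam D t <= 1) /\ (0 < alpha D t < 1))].

Definition is_leaf (n : V) : bool := per n == T.

Definition Ay (y : 'I_M -> 'I_N -> R) (j : 'I_N) : R := \sum_(i < M) y i j.
Definition By (t : nat) (y : 'I_M -> 'I_N -> R) (i : 'I_M) : R :=
  (h D t i)^-1 * \sum_(j < N) y i j.

Definition ftil (n : V) (i : 'I_M) : R :=
  if n == r then f D (per n) i else (1 - lam D (per n)) * f D (per n) i.
Definition ctil (n : V) (i : 'I_M) (j : 'I_N) : R :=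
  if n == r then c D (per n) i j else (1 - lam D (per n)) * c D (per n) i j.
Definition lamtil (n : V) : R := if is_leaf n then 0 else lam D (per n).+1.
Definition alphatil (n : V) : R :=
  if n == r then 0 else lam D (per n) / (1 - alpha D (per n)).

(* Variables are represented on all nodes; eta_n for leaves and u_1 are    *)
(* dummies: they have coefficient 0 in the objective and occur in no       *)
(* constraint.                                                             *)
Definition xvar := V -> 'I_M -> R.
Definition yvar := V -> 'I_M -> 'I_N -> R.
Definition svar := V -> R.

Definition cap (x : xvar) (n : V) (i : 'I_M) : R := \sum_(m in path_nodes n) x m i.

Definition fcost (x : xvar) (n : V) : R := \sum_(i < M) f D (per n) i * cap x n i.
Definition ccost (y : 'I_M -> 'I_N -> R) (n : V) : R :=
  \sum_(i < M) \sum_(j < N) c D (per n) i j * y i j.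

Definition zMS (x : xvar) (eta : svar) (y : yvar) (u : svar) : R :=
  \sum_(n : V) p D n *
    (\sum_(i < M) ftil n i * cap x n i
     + \sum_(i < M) \sum_(j < N) ctil n i j * y n i j
     + lamtil n * eta n + alphatil n * u n).

Definition lp_feasible (x : xvar) (eta : svar) (y : yvar) (u : svar) : Prop :=
  [/\ [/\ (forall n i, 0 <= x n i),
          (forall n i j, 0 <= y n i j) &
          (forall n, n != r -> 0 <= u n)],
      (forall n j, Ay (y n) j = d D n j),
      (forall n i, By (per n) (y n) i <= cap x n i) &
      (forall n, n != r -> fcost x n + ccost (y n) n <= u n + eta (a n))].

Definition ms_feasible x eta y u : Prop :=
  lp_feasible x eta y u /\ (forall n i, x n i \is a Num.int).

Definition lp_optimal x eta y u : Prop :=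
  lp_feasible x eta y u /\
  forall x' eta' y' u', lp_feasible x' eta' y' u' -> zMS x eta y u <= zMS x' eta' y' u'.

Definition ms_optimal x eta y u : Prop :=
  ms_feasible x eta y u /\
  forall x' eta' y' u', ms_feasible x' eta' y' u' -> zMS x eta y u <= zMS x' eta' y' u'.

Definition is_max (S : {set V}) (F : V -> R) (v : R) : Prop :=
  (exists2 m, m \in S & v = F m) /\ (forall m, m \in S -> F m <= v).

Definition ceilR (v : R) : R := (Num.ceil v)%:~R.

Definition step_a (yk : yvar) (uk : svar) (x1 : xvar) (eta1 : svar) : Prop :=
  [/\ (forall i, x1 r i = ceilR (By (per r) (yk r) i)),
      (exists Mx : xvar,
         (forall n i, is_max (path_nodes n) (fun m => ceilR (By (per m) (yk m) i)) (Mx n i))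
         /\ (forall n i, n != r -> x1 n i = Mx n i - Mx (a n) i)) &
      (forall n, ~~ is_leaf n ->
         is_max (children n) (fun m => fcost x1 m + ccost (yk m) m - uk m) (eta1 n))].

Definition sub_feasible (x1 : xvar) (eta1 : svar) (n : V)
    (yn : 'I_M -> 'I_N -> R) (un : R) : Prop :=
  [/\ (forall i, By (per n) yn i <= cap x1 n i),
      (forall j, Ay yn j = d D n j),
      fcost x1 n - eta1 (a n) <= un - ccost yn n,
      (forall i j, 0 <= yn i j) & 0 <= un].

Definition sub_obj (n : V) (yn : 'I_M -> 'I_N -> R) (un : R) : R :=
  \sum_(i < M) \sum_(j < N) ctil n i j * yn i j + alphatil n * un.

Definition sub_feasible_root (x1 : xvar) (yn : 'I_M -> 'I_N -> R) : Prop :=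
  [/\ (forall i, By (per r) yn i <= cap x1 r i),
      (forall j, Ay yn j = d D r j) &
      (forall i j, 0 <= yn i j)].

Definition sub_obj_root (yn : 'I_M -> 'I_N -> R) : R :=
  \sum_(i < M) \sum_(j < N) ctil r i j * yn i j.

Definition step_b (x1 : xvar) (eta1 : svar) (y1 : yvar) (u1 : svar) : Prop :=
  (sub_feasible_root x1 (y1 r) /\
   forall yn, sub_feasible_root x1 yn -> sub_obj_root (y1 r) <= sub_obj_root yn)
  /\
  (forall n, n != r ->
     sub_feasible x1 eta1 n (y1 n) (u1 n) /\
     forall yn un, sub_feasible x1 eta1 n yn un ->
       sub_obj n (y1 n) (u1 n) <= sub_obj n yn un).

Definition close (eps : R) (x : xvar) (eta : svar) (y : yvar) (u : svar)
    (x' : xvar) (eta' : svar) (y' : yvar) (u' : svar) : Prop :=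
  [/\ (forall n i, `|x n i - x' n i| < eps),
      (forall n, ~~ is_leaf n -> `|eta n - eta' n| < eps),
      (forall n i j, `|y n i j - y' n i j| < eps) &
      (forall n, n != r -> `|u n - u' n| < eps)].

Definition alg1_output (eps : R) (xH : xvar) (etaH : svar) (yH : yvar) (uH : svar)
  : Prop :=
  exists (xs : nat -> xvar) (es : nat -> svar) (ys : nat -> yvar) (us : nat -> svar),
    lp_optimal (xs 0%N) (es 0%N) (ys 0%N) (us 0%N) /\
    (
      ((forall n i, xs 0%N n i \is a Num.int) /\
       [/\ xH = xs 0%N, etaH = es 0%N, yH = ys 0%N & uH = us 0%N])
    \/
      (~ (forall n i, xs 0%N n i \is a Num.int) /\
       exists K : nat, [/\ (1 <= K)%N,
         (forall k, (k < K)%N ->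
            step_a (ys k) (us k) (xs k.+1) (es k.+1) /\
            step_b (xs k.+1) (es k.+1) (ys k.+1) (us k.+1)),
         close eps (xs K.-1) (es K.-1) (ys K.-1) (us K.-1) (xs K) (es K) (ys K) (us K),
         (forall k, (1 <= k < K)%N ->
            ~ close eps (xs k.-1) (es k.-1) (ys k.-1) (us k.-1) (xs k) (es k) (ys k) (us k)) &
         [/\ xH = xs K, etaH = es K, yH = ys K & uH = us K]])).

End Model.

(* Main.v *)
Require Import Defs.
From HB Require Import structures.
From mathcomp Require Import all_boot all_order all_algebra.
From mathcomp Require Import reals.
From mathcomp Require Import zify ring lra.
Import Order.TTheory GRing.Theory Num.Theory.
Local Open Scope ring_scope.

Section Prf.
Variable R : realType.
Variable D : data R.
Hypothesis wfD : wf D.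

Local Notation V := (node D).
Local Notation r := (Defs.root D).
Local Notation a := (Defs.par D).
Local Notation per := (Defs.per D).
Local Notation TT := (T D).

Lemma perr : per r = 1%N.
Proof. by case: wfD => _ _ [H _ _ _] _ _. Qed.
Lemma perS n : n != r -> per n = (per (a n)).+1.
Proof. move=> nr; case: wfD => _ _ [_ H _ _] _ _; exact: H. Qed.
Arguments perS [n].
Lemma perT n : (per n <= TT)%N.
Proof. by case: wfD => _ _ [_ _ H _] _ _; apply: H. Qed.
Lemma per_ge1 n : (1 <= per n)%N.
Proof.
case: (eqVneq n r) => [->|nr]; first by rewrite perr.
by rewrite (perS nr).
Qed.
Lemma per1 n : (per n == 1%N) = (n == r).
Proof.
case: (eqVneq n r) => [->|nr]; first by rewrite perr.
by move: (per_ge1 (a n)); rewrite (perS nr); lia.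
Qed.
Lemma fnn t i : (1 <= t <= TT)%N -> 0 <= f D t i.
Proof. by case: wfD => _ [H _ _] _ _ _; apply: H. Qed.
Lemma ppos n : 0 < p D n.
Proof. by case: wfD => _ _ _ [H _ _ _] _; apply: H. Qed.
Lemma psum t : (1 <= t <= TT)%N -> \sum_(n | per n == t) p D n = 1.
Proof. by case: wfD => _ _ _ [_ H _ _] _; apply: H. Qed.
Lemma lamH t : (2 <= t <= TT)%N -> (0 <= lam D t <= 1).
Proof. by case: wfD => _ _ _ _ H /H []. Qed.
Arguments lamH [t].

Lemma iter_per n k : (k < per n)%N -> per (iter k a n) = (per n - k)%N.
Proof.
elim: k => [|k IH] Hk; first by rewrite subn0.
rewrite iterS.
have Hm := IH (ltnW Hk).
have nr : iter k a n != r.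
  apply/negP => /eqP E; move: Hm; rewrite E perr; lia.
move: (perS nr); rewrite Hm; lia.
Qed.

Lemma inP n m : reflect (exists2 k, (k < per n)%N & iter k a n = m) (m \in (@path_nodes _ D) n).
Proof.
rewrite inE; apply: (iffP existsP) => [[k /andP [Hk /eqP E]]|[k Hk E]].
  by exists k.
have HkT : (k < TT)%N by apply: leq_trans Hk (perT n).
by exists (Ordinal HkT); rewrite /= Hk E eqxx.
Qed.

Lemma path_self n : n \in (@path_nodes _ D) n.
Proof. by apply/inP; exists 0%N => //; rewrite per_ge1. Qed.

Lemma path_per n m : m \in (@path_nodes _ D) n -> (per m <= per n)%N.
Proof. by case/inP => k Hk <-; rewrite iter_per // leq_subr. Qed.

Lemma path_sub n m l : m \in (@path_nodes _ D) n -> l \in (@path_nodes _ D) m ->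
  l \in (@path_nodes _ D) n.
Proof.
case/inP => k Hk <-; case/inP => j; rewrite iter_per // => Hj <-.
apply/inP; exists (j + k)%N; last by rewrite iterD.
lia.
Qed.

Lemma path_root m : (m \in (@path_nodes _ D) r) = (m == r).
Proof.
apply/inP/eqP => [[k]|->]; last by exists 0%N; rewrite ?perr.
by rewrite perr ltnS leqn0 => /eqP -> <-.
Qed.

Lemma path_par n m : n != r ->
  (m \in (@path_nodes _ D) n) = (m == n) || (m \in (@path_nodes _ D) (a n)).
Proof.
move=> nr; apply/idP/idP.
  case/inP => [[|k]] Hk <-; first by rewrite eqxx.
  apply/orP; right; apply/inP; exists k; last by rewrite iterSr.
  by move: Hk; rewrite (perS nr).
case/orP => [/eqP ->|H]; first exact: path_self.
apply: path_sub H; apply/inP; exists 1%N => //.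
by rewrite (perS nr) ltnS per_ge1.
Qed.

Lemma cap_root (x : xvar D) i : cap x r i = x r i.
Proof. by rewrite /cap (big_pred1 r) // => m; rewrite /= path_root. Qed.

Lemma capS (x : xvar D) n i : n != r -> cap x n i = x n i + cap x (a n) i.
Proof.
move=> nr; rewrite /cap (bigD1 n) ?path_self //=; congr (_ + _).
apply: eq_bigl => m; rewrite path_par //.
case: (eqVneq m n) => [->|mn] /=; last by rewrite andbT.
apply/esym/negP => /path_per; rewrite (perS nr); lia.
Qed.

Lemma cap_mono (x : xvar D) n m i : m \in (@path_nodes _ D) n ->
  (forall l, 0 <= x l i) -> cap x m i <= cap x n i.
Proof.
move=> Hm Hx; rewrite /cap [X in _ <= X](bigID (fun l => l \in (@path_nodes _ D) m)) /=.
rewrite -[X in X <= _]addr0; apply: lerD; last by apply: sumr_ge0.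
rewrite le_eqVlt; apply/orP; left; apply/eqP; apply: eq_bigl => l.
apply/idP/idP => [H|/andP [] //]; by rewrite H (@path_sub _ _ _ Hm H).
Qed.
Arguments cap_mono [x n m i].

Lemma ceilR_ge (v : R) : v <= ceilR v.
Proof. exact: ceil_ge. Qed.
Lemma ceilR_lt (v : R) : ceilR v < v + 1.
Proof. have := ceilB1_lt v; rewrite /ceilR intrB; lra. Qed.
Lemma ceilR_le (v w : R) : v <= ceilR w -> ceilR v <= ceilR w.
Proof. by rewrite /ceilR ler_int ceil_le_int. Qed.

Lemma capMx yk uk x1 e1 : step_a yk uk x1 e1 ->
  exists Mx : xvar D,
    (forall n i, is_max ((@path_nodes _ D) n) (fun m => ceilR (By (per m) (yk m) i)) (Mx n i))
    /\ (forall n i, cap x1 n i = Mx n i).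
Proof.
case=> Hr [Mx [HM HS]] _; exists Mx; split => // n i.
move: {2}(per n) (leqnn (per n)) => k; elim: k n => [|k IH] n Hn.
  by move: (per_ge1 n); lia.
case: (eqVneq n r) => [->|nr].
  rewrite cap_root Hr; case: (HM r i) => [[m]]; rewrite path_root => /eqP -> -> _ //.
rewrite capS // IH; first by rewrite HS //; ring.
by move: Hn; rewrite (perS nr).
Qed.
Arguments capMx [yk uk x1 e1].

Lemma leaf_par n : n != r -> ~~ is_leaf (a n).
Proof. by move=> nr; rewrite /is_leaf; move: (perT n); rewrite (perS nr); lia. Qed.
Lemma child_par n : n != r -> n \in children (a n).
Proof. by move=> nr; rewrite inE nr eqxx. Qed.
Arguments leaf_par [n].
Arguments child_par [n].


Lemma ftil_ge0 (n : V) i : 0 <= ftil n i.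
Proof.
rewrite /ftil; case: (eqVneq n r) => [->|nr].
  by apply: fnn; rewrite perr; move: (perT r); rewrite perr.
have H2 : (2 <= per n <= TT)%N by rewrite perT (perS nr) ltnS per_ge1.
case/andP: (lamH H2) => _ H1; apply: mulr_ge0; first by rewrite subr_ge0.
by apply: fnn; rewrite perT per_ge1.
Qed.

Lemma lam_next (n : V) : ~~ is_leaf n -> 0 <= lam D (per n).+1.
Proof.
rewrite /is_leaf => nl.
have H2 : (2 <= (per n).+1 <= TT)%N.
  by move: (perT n) (per_ge1 n) nl; lia.
by case/andP: (lamH H2).
Qed.

Lemma lamtil_ge0 (n : V) : 0 <= lamtil n.
Proof. by rewrite /lamtil; case: ifP => // /negbT /lam_next. Qed.

Lemma By_le (Mx : xvar D) (y : yvar D) :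
  (forall n i, is_max ((@path_nodes _ D) n) (fun m => ceilR (By (per m) (y m) i)) (Mx n i)) ->
  forall n i, By (per n) (y n) i <= Mx n i.
Proof.
move=> HM n i; apply: le_trans (ceilR_ge _) _; exact: (HM n i).2 _ (path_self n).
Qed.

Lemma stepb_feas (x : xvar D) e (y : yvar D) u : step_b x e y u ->
  [/\ (forall n i j, 0 <= y n i j), (forall n j, Ay (y n) j = d D n j)
    & (forall n, n != r -> 0 <= u n)].
Proof.
case=> [[[_ Ar yr] _] Hn]; split.
- move=> n i j; case: (eqVneq n r) => [->|nr]; first exact: yr.
  by case: (Hn n nr) => [[_ _ _ Hy _] _].
- move=> n j; case: (eqVneq n r) => [->|nr]; first exact: Ar.
  by case: (Hn n nr) => [[_ HA _ _ _] _].
- by move=> n nr; case: (Hn n nr) => [[_ _ _ _ Hu] _].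
Qed.
Arguments stepb_feas [x e y u].

Lemma stepb_dec (x1 : xvar D) e1 (y0 : yvar D) u0 y1 u1 :
  (forall n i j, 0 <= y0 n i j) -> (forall n j, Ay (y0 n) j = d D n j) ->
  (forall n, n != r -> 0 <= u0 n) ->
  step_a y0 u0 x1 e1 -> step_b x1 e1 y1 u1 -> zMS x1 e1 y1 u1 <= zMS x1 e1 y0 u0.
Proof.
move=> Hy HA Hu Ha [[_ Hr] Hn].
have [Mx [HM Hcap]] := capMx Ha.
case: Ha => _ _ He.
have HB : forall n i, By (per n) (y0 n) i <= cap x1 n i.
  by move=> n i; rewrite Hcap; apply: By_le.
rewrite /zMS; apply: ler_sum => n _; apply: ler_wpM2l; first exact: ltW (ppos n).
case: (eqVneq n r) => [->|nr].
  have := Hr (y0 r) (And3 (HB r) (HA r) (Hy r)).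
  rewrite /sub_obj_root /alphatil eqxx !mul0r => H; lra.
case: (Hn n nr) => _ Hopt.
have Hrisk := (He (a n) (leaf_par nr)).2 n (child_par nr).
have Hfeas : sub_feasible x1 e1 n (y0 n) (u0 n).
  split; [exact: HB | exact: HA | simpl in Hrisk; lra | exact: Hy | exact: Hu].
have := Hopt _ _ Hfeas; rewrite /sub_obj => H; lra.
Qed.
Arguments stepb_dec [x1 e1 y0 u0 y1 u1].

Lemma mono (yp : yvar D) up (x0 : xvar D) e0 (y0 : yvar D) u0 (x1 : xvar D) e1 :
  step_a yp up x0 e0 -> step_b x0 e0 y0 u0 -> step_a y0 u0 x1 e1 ->
  zMS x1 e1 y0 u0 <= zMS x0 e0 y0 u0.
Proof.
move=> Ha0 Hb Ha1.
have [M0 [HM0 Hc0]] := capMx Ha0.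
have [M1 [HM1 Hc1]] := capMx Ha1.
case: Ha1 => _ _ He1.
case: Hb => [[[Br _ _] _] Hn].
have HB : forall n i, By (per n) (y0 n) i <= cap x0 n i.
  move=> n i; case: (eqVneq n r) => [->|nr]; first exact: Br.
  by case: (Hn n nr) => [[H _ _ _ _] _].
have Hcap : forall n i, cap x1 n i <= cap x0 n i.
  move=> n i; rewrite Hc1; case: (HM1 n i) => [[m Hm ->]] _.
  have := HB m i; rewrite Hc0; case: (HM0 m i) => [[m' Hm' E]] _; rewrite E /= => H.
  rewrite Hc0 /=; apply: le_trans (ceilR_le _ _ H) _.
  exact: (HM0 n i).2 _ (@path_sub _ _ _ Hm Hm').
have Hf : forall n, fcost x1 n <= fcost x0 n.
  move=> n; rewrite /fcost; apply: ler_sum => i _; apply: ler_wpM2l => //.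
  by apply: fnn; rewrite per_ge1 perT.
have Heta : forall n, ~~ is_leaf n -> e1 n <= e0 n.
  move=> n nl; case: (He1 n nl) => [[m Hm ->]] _.
  move: Hm; rewrite inE => /andP [mr /eqP am].
  case: (Hn m mr) => [[_ _ Hrisk _ _] _]; rewrite am in Hrisk.
  have := Hf m; simpl; lra.
rewrite /zMS; apply: ler_sum => n _; apply: ler_wpM2l; first exact: ltW (ppos n).
have HX : \sum_i ftil n i * cap x1 n i <= \sum_i ftil n i * cap x0 n i.
  apply: ler_sum => i _; apply: ler_wpM2l; [exact: ftil_ge0 | exact: Hcap].
have HL : lamtil n * e1 n <= lamtil n * e0 n.
  case nl: (is_leaf n); first by rewrite /lamtil nl !mul0r.
  apply: ler_wpM2l; [exact: lamtil_ge0 | by apply: Heta; rewrite nl].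
lra.
Qed.
Arguments mono [yp up x0 e0 y0 u0 x1 e1].

Definition FF t := \sum_(i < M D) f D t i.
Definition GG t := (if t == 1%N then FF t else (1 - lam D t) * FF t)
  + (if t == TT then 0 else lam D t.+1 * FF t.+1).

Lemma first (x0 : xvar D) e0 (y0 : yvar D) u0 (x1 : xvar D) e1 :
  lp_feasible x0 e0 y0 u0 -> step_a y0 u0 x1 e1 ->
  zMS x1 e1 y0 u0 <= zMS x0 e0 y0 u0 + \sum_n p D n * GG (per n).
Proof.
move=> [[Hx _ _] _ HB Hrisk] Ha1.
have [M1 [HM1 Hc1]] := capMx Ha1.
case: Ha1 => _ _ He1.
have Hcap : forall n i, cap x1 n i <= cap x0 n i + 1.
  move=> n i; rewrite Hc1; case: (HM1 n i) => [[m Hm ->]] _.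
  apply: le_trans (ltW (ceilR_lt _)) _; rewrite lerD2r; apply: le_trans (HB m i) _.
  exact: cap_mono Hm (fun l => Hx l i).
have Hf : forall n, fcost x1 n <= fcost x0 n + FF (per n).
  move=> n; rewrite /fcost /FF -big_split /=; apply: ler_sum => i _.
  have fge : 0 <= f D (per n) i by apply: fnn; rewrite per_ge1 perT.
  apply: le_trans (ler_wpM2l fge (Hcap n i)) _; by rewrite mulrDr mulr1.
have Heta : forall n, ~~ is_leaf n -> e1 n <= e0 n + FF (per n).+1.
  move=> n nl; case: (He1 n nl) => [[m Hm ->]] _.
  move: Hm; rewrite inE => /andP [mr /eqP am].
  move: (Hrisk m mr) (Hf m); rewrite (perS mr) am => H1 H2 /=; lra.
rewrite /zMS -big_split /=; apply: ler_sum => n _.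
rewrite -mulrDr; apply: ler_wpM2l; first exact: ltW (ppos n).
have HX : \sum_i ftil n i * cap x1 n i <= \sum_i ftil n i * cap x0 n i
   + (if per n == 1%N then FF (per n) else (1 - lam D (per n)) * FF (per n)).
  have -> : (if per n == 1%N then FF (per n) else (1 - lam D (per n)) * FF (per n))
      = \sum_i ftil n i.
    by rewrite /ftil per1 /FF; case: (n == r) => //; rewrite mulr_sumr.
  rewrite -big_split; apply: ler_sum => i _ /=.
  apply: le_trans (ler_wpM2l (ftil_ge0 n i) (Hcap n i)) _; by rewrite mulrDr mulr1.
have HL : lamtil n * e1 n <= lamtil n * e0 n
   + (if per n == TT then 0 else lam D (per n).+1 * FF (per n).+1).
  have nlE : is_leaf n = (per n == TT) by [].
  rewrite /lamtil nlE; case: ifP => Hl; first by rewrite !mul0r addr0.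
  have nl : ~~ is_leaf n by rewrite nlE Hl.
  rewrite -mulrDr; apply: ler_wpM2l; [exact: lam_next | exact: Heta].
rewrite /GG; lra.
Qed.
Arguments first [x0 e0 y0 u0 x1 e1].

Lemma level_sum (G : nat -> R) :
  \sum_n p D n * G (per n) = \sum_(1 <= t < TT.+1) G t.
Proof.
transitivity (\sum_(1 <= t < TT.+1) \sum_n (if per n == t then p D n * G t else 0)).
  rewrite exchange_big /=; apply: eq_bigr => n _.
  rewrite -big_mkcond -big_filter.
  have -> : [seq t <- index_iota 1 TT.+1 | per n == t] = [:: per n].
    rewrite (@eq_filter _ _ (pred1 (per n))); last by move=> t; rewrite /= eq_sym.
    apply: filter_pred1_uniq; first exact: iota_uniq.
    rewrite /index_iota mem_iota per_ge1 /=; move: (perT n); lia.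
  by rewrite big_seq1.
apply: eq_big_nat => t Ht; rewrite -big_mkcond /= -mulr_suml psum ?mul1r //.
Qed.

Lemma GG_sum : \sum_(1 <= t < TT.+1) GG t
  = \sum_(1 <= t < TT.+1) \sum_(i < M D) f D t i.
Proof.
transitivity (\sum_(1 <= t < TT.+1) FF t); last by [].
have T1 : (1 <= TT)%N by move: (perT r); rewrite perr.
pose L t := if t == 1%N then 0 else lam D t * FF t.
pose B t := if t == TT then 0 else lam D t.+1 * FF t.+1.
have -> : \sum_(1 <= t < TT.+1) GG t
    = \sum_(1 <= t < TT.+1) (FF t - L t) + \sum_(1 <= t < TT.+1) B t.
  rewrite -big_split /=; apply: eq_bigr => t _; rewrite /GG /L /B.
  by case: (t == 1%N) => /=; ring.
rewrite sumrB.
have HB : \sum_(1 <= t < TT.+1) B t = \sum_(1 <= t < TT) L t.+1.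
  rewrite big_nat_recr //= {2}/B eqxx addr0; apply: eq_big_nat => t Ht.
  rewrite /B /L.
  have -> : (t == TT) = false by move: Ht; lia.
  by have -> : (t.+1 == 1%N) = false by move: Ht; lia.
have HL : \sum_(1 <= t < TT.+1) L t = \sum_(1 <= t < TT) L t.+1.
  by rewrite big_nat_recl // {1}/L eqxx add0r.
by rewrite HB HL subrK.
Qed.

Lemma main_aux (eps : R) (xH : xvar D) (etaH : svar D) (yH : yvar D) (uH : svar D)
    (xs : xvar D) (es : svar D) (ys : yvar D) (us : svar D) :
  alg1_output eps xH etaH yH uH ->
  ms_optimal xs es ys us ->
  zMS xH etaH yH uH - zMS xs es ys us
    <= \sum_(1 <= t < TT.+1) \sum_(i < M D) f D t i.
Proof.
move=> [xs' [es' [ys' [us' [Hlp Hcase]]]]] [Hmsf _].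
have Z0le := Hlp.2 _ _ _ _ Hmsf.1.
have Fge0 : 0 <= \sum_(1 <= t < TT.+1) \sum_(i < M D) f D t i.
  rewrite big_nat_cond; apply: sumr_ge0 => t /andP [/andP [t1 tT] _].
  apply: sumr_ge0 => i _; apply: fnn; apply/andP; split => //; by rewrite -ltnS.
case: Hcase => [[_ [-> -> -> ->]] | [_ [K [K1 Hsteps _ _ [-> -> -> ->]]]]].
  lra.
set W := zMS (xs' 1%N) (es' 1%N) (ys' 0%N) (us' 0%N).
have HW : W <= zMS (xs' 0%N) (es' 0%N) (ys' 0%N) (us' 0%N)
    + \sum_(1 <= t < TT.+1) \sum_(i < M D) f D t i.
  rewrite -GG_sum -level_sum; exact: first Hlp.1 (Hsteps 0%N K1).1.
have Hk : forall k, (k.+1 <= K)%N ->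
    zMS (xs' k.+1) (es' k.+1) (ys' k.+1) (us' k.+1) <= W.
  elim => [|k IH] HkK.
    case: Hlp.1 => [[_ Hy Hu] HA _ _].
    exact: stepb_dec Hy HA Hu (Hsteps 0%N K1).1 (Hsteps 0%N K1).2.
  apply: le_trans (IH (ltnW HkK)).
  have Hk1 : (k < K)%N by apply: ltnW.
  have [Hy HA Hu] := stepb_feas (Hsteps k Hk1).2.
  apply: le_trans (stepb_dec Hy HA Hu (Hsteps k.+1 HkK).1 (Hsteps k.+1 HkK).2) _.
  exact: mono (Hsteps k Hk1).1 (Hsteps k Hk1).2 (Hsteps k.+1 HkK).1.
case: K K1 Hsteps Hk => // K' _ _ Hk.
have := Hk K' (leqnn _); lra.
Qed.

End Prf.

Theorem proposition4 (R : realType) (D : data R) (eps : R)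
    (xH : xvar D) (etaH : svar D) (yH : yvar D) (uH : svar D)
    (xs : xvar D) (es : svar D) (ys : yvar D) (us : svar D) :
  wf D -> 0 < eps ->
  alg1_output eps xH etaH yH uH ->
  ms_optimal xs es ys us ->
  zMS xH etaH yH uH - zMS xs es ys us
    <= \sum_(1 <= t < (T D).+1) \sum_(i < M D) f D t i.
Proof.
move=> wfD _ Halg Hopt; exact: (@main_aux R D wfD eps xH etaH yH uH xs es ys us Halg Hopt).
Qed.
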